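(* Let $A$ be an $m\times n$ matrix with columns $a_1,\dots,a_n$. Then $A$ is optimally sparse if and only if for every nonzero vector $x\in\mathbb{Q}^n$, $\|Ax\|_0\ge \max_{i\in\operatorname{supp}(x)}\|a_i\|_0$.
   Context: $\|v\|_0$ is the number of nonzero entries of a vector $v$; $\operatorname{supp}(x)=\{i: x_i\neq 0\}$; $\operatorname{nnz}(M)$ is the number of nonzero entries of a matrix $M$. $A$ is optimally sparse if $\operatorname{nnz}(AX)\ge\operatorname{nnz}(A)$ for every invertible $n\times n$ matrix $X$. *)

(* Defs.v *)
From mathcomp Require Import all_boot all_order all_algebra.
Set Implicit Arguments. Unset Strict Implicit. Unset Printing Implicit Defensive.
Import GRing.Theory.
Local Open Scope ring_scope.

Definition nnz (R : nzRingType) (p q : nat) (M : 'M[R]_(p, q)) : nat :=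
  #|[set ij : 'I_p * 'I_q | M ij.1 ij.2 != 0]|.

Definition supp (R : nzRingType) (n : nat) (x : 'cV[R]_n) : {set 'I_n} :=
  [set i | x i 0 != 0].

Definition optimally_sparse (R : comUnitRingType) (m n : nat) (A : 'M[R]_(m, n)) : Prop :=
  forall X : 'M[R]_n, X \in unitmx -> (nnz A <= nnz (A *m X))%N.

(* Main.v *)
Require Import Defs.
From mathcomp Require Import all_boot all_order all_algebra all_fingroup.
Set Implicit Arguments. Unset Strict Implicit. Unset Printing Implicit Defensive.
Import GRing.Theory.
Local Open Scope ring_scope.

Lemma nnzE (R : nzRingType) p q (M : 'M[R]_(p, q)) :
  nnz M = (\sum_i \sum_j (M i j != 0%R : nat))%N.
Proof.
rewrite /nnz -sum1_card pair_big /= big_mkcond /=.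
by apply: eq_bigr => -[i j] _; rewrite inE /=; case: (M i j != 0).
Qed.

Lemma nnz_col (R : nzRingType) p q (M : 'M[R]_(p, q)) j :
  nnz (col j M) = (\sum_i (M i j != 0%R : nat))%N.
Proof. by rewrite nnzE; apply: eq_bigr => i _; rewrite big_ord1 mxE. Qed.

Lemma nnz_cols (R : nzRingType) p q (M : 'M[R]_(p, q)) :
  nnz M = (\sum_j nnz (col j M))%N.
Proof.
rewrite nnzE exchange_big /=; apply: eq_bigr => j _; by rewrite nnz_col.
Qed.

Lemma col_mulmx (R : nzRingType) p q r (A : 'M[R]_(p, q)) (B : 'M[R]_(q, r)) j :
  col j (A *m B) = A *m col j B.
Proof. by rewrite !colE mulmxA. Qed.

Theorem mainTheorem5 (m n : nat) (A : 'M[rat]_(m, n)) :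
  optimally_sparse A <->
  (forall x : 'cV[rat]_n, x != 0 ->
     (\max_(i in supp x) nnz (col i A) <= nnz (A *m x))%N).
Proof.
split.
- move=> OS x x0; apply/bigmax_leqP => i; rewrite inE => xi.
  set X := (\matrix_(k, j) if j == i then x k 0 else (k == j)%:R) : 'M[rat]_n.
  have Xu : X \in unitmx.
    set u := x - delta_mx i 0.
    have XE : X = 1%:M + u *m delta_mx 0 i.
      apply/matrixP => k j; rewrite !mxE (bigD1 ord0) //= big1 ?addr0; last first.
        by move=> l; rewrite ord1 eqxx.
      rewrite !mxE eqxx /=; case: (j =P i) => [->|_]; last by rewrite mulr0 addr0.
      by rewrite mulr1 andbT addrC subrK.
    set c := x i 0.
    have Eu : delta_mx 0 i *m u = (c - 1)%:M.
      rewrite -rowE; apply/matrixP => a b; rewrite !ord1 !mxE eqxx /=.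
      by rewrite /c.
    set E := u *m delta_mx 0 i.
    have EE : E *m E = (c - 1) *: E.
      by rewrite /E mulmxA -(mulmxA u) Eu mul_mx_scalar -scalemxAl.
    have : X *m (1%:M - c^-1 *: E) = 1%:M.
      rewrite XE mulmxDl mul1mx mulmxBr mulmx1 -scalemxAr EE scalerA.
      rewrite mulrBr mulVf // mulr1 scalerBl scale1r opprB -/E [E + _]addrC subrK.
      by rewrite subrK.
    by case/mulmx1_unit.
  have := OS X Xu; rewrite (nnz_cols A) (nnz_cols (A *m X)).
  have colX j : j != i -> A *m col j X = col j A.
    move=> ji; rewrite [RHS]colE; f_equal; apply/matrixP => a b.
    by rewrite !mxE (negbTE ji) ord1 eqxx andbT.
  have colXi : A *m col i X = A *m x.
    f_equal; apply/matrixP => a b; by rewrite !mxE eqxx ord1.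
  rewrite (bigD1 i) //= [X in (_ <= X)%N](bigD1 i) //= col_mulmx colXi.
  have -> : (\sum_(j < n | j != i) nnz (col j (A *m X)) = \sum_(j < n | j != i) nnz (col j A))%N.
    by apply: eq_bigr => j ji; rewrite col_mulmx colX.
  by rewrite leq_add2r.
- move=> H X Xu.
  have : \det X != 0 by rewrite -unitfE -unitmxE.
  rewrite /determinant => /eqP dX.
  have [s Hs] : exists s : 'S_n, \prod_i X i (s i) != 0.
    case: (pickP (fun s : 'S_n => \prod_i X i (s i) != 0)) => [s Hs|Hn].
      by exists s.
    exfalso; apply: dX; rewrite big1 // => s _.
    by move: (Hn s) => /negbFE /eqP ->; rewrite mulr0.
  have Xs i : X i (s i) != 0.
    by apply: contra Hs => /eqP Z; rewrite (bigD1 i) //= Z mul0r.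
  rewrite (nnz_cols (A *m X)) nnz_cols [Y in (_ <= Y)%N](reindex_inj (@perm_inj _ s)) /=.
  apply: leq_sum => i _; rewrite col_mulmx.
  have xs0 : col (s i) X != 0.
    apply: contra (Xs i) => /eqP Z.
    have : col (s i) X i 0 = 0 by rewrite Z mxE.
    by rewrite mxE => ->.
  apply: leq_trans (H _ xs0) => /=.
  apply: (leq_bigmax_cond (F := fun k => nnz (col k A))); by rewrite /supp inE mxE.
Qed.
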